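(* For every integer $n\ge 3$, $$\pi_n=\frac{n}{2\cos(\pi/n)}\left(\cos\Big(\tfrac{\pi}{n}\big(2\lfloor\tfrac{n+1}{4}\rfloor-1\big)\Big)-\cos\Big(\tfrac{\pi}{n}\big(2\lfloor\tfrac{n+1}{4}\rfloor+1\big)\Big)\right),$$ equivalently $$\pi_n=\begin{cases} n\tan(\pi/n) & n\equiv 0\pmod 4,\\ n\tan(\pi/n)\cos\big(\tfrac{\pi}{2n}\big) & n \text{ odd},\\ n\sin(\pi/n) & n\equiv 2\pmod 4.\end{cases}$$ In particular $\pi_3=9/2$, $\pi_4=4$, $\pi_5=\tfrac{5(5-\sqrt5)}{4}$, $\pi_6=3$, $\pi_8=8\sqrt2-8$.
   Context: For a convex set $B\subset\mathbb{R}^2$ and an interior point $x_0$, $\|x\|_{B,x_0}:=\inf\{\xi>0 : x\in \xi(B-x_0)\}$. For $n\ge3$ let $B_n$ be a regular convex $n$-gon and $c_n$ its center; $\pi_n$ denotes one half of the perimeter of $B_n$ measured with $\|\cdot\|_{B_n,c_n}$, i.e. $\pi_n=\frac12\sum_{i=1}^n\|p_i-p_{i-1}\|_{B_n,c_n}$ where $p_0,\dots,p_n=p_0$ are the vertices of $B_n$ in counterclockwise order (this is independent of the size, position and orientation of $B_n$, and equals the clockwise value). *)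

(* Defs.v *)
From HB Require Import structures.
From mathcomp Require Import all_boot all_order all_algebra.
From mathcomp Require Import all_classical all_reals all_analysis.
Unset Printing Implicit Defensive.
Import Order.TTheory GRing.Theory Num.Theory.
Local Open Scope classical_set_scope.
Local Open Scope ring_scope.

Definition vtx (R : realType) (n k : nat) : R * R :=
  (cos (2 * pi * k%:R / n%:R), sin (2 * pi * k%:R / n%:R)).

Definition ngon (R : realType) (n : nat) : set (R * R) :=
  [set x | exists w : nat -> R,
     (forall i, 0 <= w i) /\ \sum_(i < n) w i = 1 /\
     x.1 = \sum_(i < n) w i * (vtx R n i).1 /\
     x.2 = \sum_(i < n) w i * (vtx R n i).2].

Definition gauge (R : realType) (B : set (R * R)) (x0 x : R * R) : R :=
  inf [set xi : R | 0 < xi /\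
        exists y, B y /\ x = (xi * (y.1 - x0.1), xi * (y.2 - x0.2))].

(* Half of the perimeter of B_n measured in its own gauge about its centre c_n = 0:
   pi_n = 1/2 * sum_{i=1}^n ||p_i - p_{i-1}||  (p_n = p_0). *)
Definition pi_n (R : realType) (n : nat) : R :=
  2^-1 * \sum_(i < n)
    @gauge R (ngon R n) (0, 0)
      ((vtx R n i.+1).1 - (vtx R n i).1, (vtx R n i.+1).2 - (vtx R n i).2).

(* Main.v *)
Require Import Defs.
From HB Require Import structures.
From mathcomp Require Import all_boot all_order all_algebra.
From mathcomp Require Import all_classical all_reals all_analysis.
From mathcomp Require Import ring lra zify.
Import Order.TTheory GRing.Theory Num.Theory.
Local Open Scope ring_scope.
Lemma gauge_cert (R : realType) (B : set (R*R)) (x : R*R) (al be g : R) :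
  0 < g ->
  (forall y, B y -> al * y.1 + be * y.2 <= 1) ->
  al * x.1 + be * x.2 = g ->
  (exists y, B y /\ x = (g * y.1, g * y.2)) ->
  gauge R B (0,0) x = g.
Proof.
move=> g0 hB hx [y [By xy]].
rewrite /gauge.
set S := (X in inf X).
have gS : S g.
  split => //; exists y; split => //=; by rewrite !subr0.
have lbS : lbound S g.
  move=> xi [xi0 [z [Bz xz]]].
  move: hx; rewrite xz /= !subr0 => <-.
  have h := hB _ Bz.
  have -> : al * (xi * z.1) + be * (xi * z.2) = xi * (al * z.1 + be * z.2) by ring.
  by rewrite -[X in _ <= X]mulr1 ler_wpM2l // ltW.
apply/eqP; rewrite eq_le; apply/andP; split.
  by apply: (ge_inf _ gS); exists g.
by apply: lb_le_inf => //; exists g.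
Qed.

Lemma ngon_lin (R : realType) n (al be : R) :
  (forall m, (m < n)%N -> al * (vtx R n m).1 + be * (vtx R n m).2 <= 1) ->
  forall y, ngon R n y -> al * y.1 + be * y.2 <= 1.
Proof.
move=> h y [w [w0 [w1 [-> ->]]]].
rewrite !mulr_sumr -big_split /= -[leRHS]w1.
apply: ler_sum => i _ /=.
have -> : al * (w i * (vtx R n i).1) + be * (w i * (vtx R n i).2)
   = w i * (al * (vtx R n i).1 + be * (vtx R n i).2) by ring.
by rewrite -[leRHS]mulr1 ler_wpM2l //; apply: h.
Qed.

Lemma ngon_two (R : realType) n j1 j2 (l1 l2 : R) (y : R*R) :
  (j1 < n)%N -> (j2 < n)%N -> j1 != j2 -> 0 <= l1 -> 0 <= l2 -> l1 + l2 = 1 ->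
  y = (l1 * (vtx R n j1).1 + l2 * (vtx R n j2).1,
       l1 * (vtx R n j1).2 + l2 * (vtx R n j2).2) ->
  ngon R n y.
Proof.
move=> h1 h2 hne hl1 hl2 hs ->.
pose w m : R := if m == j1 then l1 else if m == j2 then l2 else 0.
have key : forall f : nat -> R, \sum_(i < n) w i * f i = l1 * f j1 + l2 * f j2.
  move=> f.
  rewrite (bigD1 (Ordinal h1)) //= (bigD1 (Ordinal h2)) /=; last first.
    by rewrite -val_eqE /= eq_sym.
  rewrite big1 ?addr0 ?addrA.
    by rewrite /w eqxx eq_sym (negbTE hne) eqxx.
  move=> i /andP[hi1 hi2].
  have n1 : ((i:nat) == j1) = false by apply/negbTE; exact: hi1.
  have n2 : ((i:nat) == j2) = false by apply/negbTE; exact: hi2.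
  by rewrite /w n1 n2 mul0r.
exists w; split; first by move=> i; rewrite /w; case: ifP => // _; case: ifP.
split; last by split; symmetry; [exact: (key (fun i => (vtx R n i).1)) | exact: (key (fun i => (vtx R n i).2))].
by have := key (fun _ => 1); rewrite !mulr1 hs => <-; apply: eq_bigr => i _; rewrite mulr1.
Qed.

Lemma cos_per (R : realType) (x : R) q : cos (x + 2 * pi * q%:R) = cos x.
Proof.
rewrite -(periodicn (@cosD2pi R) q x); congr cos; rewrite !mulr_natr; ring.
Qed.

Lemma sin_per (R : realType) (x : R) q : sin (x + 2 * pi * q%:R) = sin x.
Proof.
rewrite -(periodicn (@sinD2pi R) q x); congr sin; rewrite !mulr_natr; ring.
Qed.

Lemma vtxE (R : realType) n m :
  vtx R n m = (cos (2 * m%:R * (pi / n%:R)), sin (2 * m%:R * (pi / n%:R))).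
Proof. by rewrite /vtx; congr (cos _, sin _); ring. Qed.

Lemma vtx_per (R : realType) n m q : (0 < n)%N -> vtx R n (m + q * n) = vtx R n m.
Proof.
move=> n0.
have nz : (n%:R : R) != 0 by rewrite pnatr_eq0 -lt0n.
rewrite !vtxE.
have -> : 2 * (m + q * n)%:R * (pi / n%:R) = 2 * m%:R * (pi / n%:R) + 2 * pi * q%:R :> R.
  by rewrite natrD natrM; field.
by rewrite cos_per sin_per.
Qed.
Lemma ale (R : realType) n (p q : R) : (0 < n)%N ->
  (p * (pi / n%:R) <= q * pi) = (p <= q * n%:R).
Proof.
move=> n0; have -> : p * (pi / n%:R) = (p / n%:R) * pi by ring.
by rewrite ler_pM2r ?pi_gt0 // ler_pdivrMr // ltr0n.
Qed.
Lemma alt (R : realType) n (p q : R) : (0 < n)%N ->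
  (p * (pi / n%:R) < q * pi) = (p < q * n%:R).
Proof.
move=> n0; have -> : p * (pi / n%:R) = (p / n%:R) * pi by ring.
by rewrite ltr_pM2r ?pi_gt0 // ltr_pdivrMr // ltr0n.
Qed.
Lemma gea (R : realType) n (p q : R) : (0 < n)%N ->
  (q * pi <= p * (pi / n%:R)) = (q * n%:R <= p).
Proof.
move=> n0; have -> : p * (pi / n%:R) = (p / n%:R) * pi by ring.
by rewrite ler_pM2r ?pi_gt0 // ler_pdivlMr // ltr0n.
Qed.
Lemma gta (R : realType) n (p q : R) : (0 < n)%N ->
  (q * pi < p * (pi / n%:R)) = (q * n%:R < p).
Proof.
move=> n0; have -> : p * (pi / n%:R) = (p / n%:R) * pi by ring.
by rewrite ltr_pM2r ?pi_gt0 // ltr_pdivlMr // ltr0n.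
Qed.

Lemma cos_le_mono (R : realType) (x y : R) : 0 <= x -> x <= y -> y <= pi -> cos y <= cos x.
Proof.
move=> x0 xy ypi.
rewrite leNgt ltr_cos ?in_itv /= -?leNgt //; apply/andP; split => //.
- exact: le_trans xy.
- exact: le_trans xy ypi.
Qed.

Lemma cos_odd_le (R : realType) n p : (0 < n)%N -> (1 <= p)%N -> (p <= 2 * n - 1)%N ->
  cos (p%:R * (pi / n%:R)) <= cos (pi / n%:R) :> R.
Proof.
move=> n0 p1 p2.
have nz : (n%:R : R) != 0 by rewrite pnatr_eq0 -lt0n.
have a0 : 0 <= pi / n%:R :> R by rewrite divr_ge0 ?pi_ge0 ?ler0n.
have small : forall p, (1 <= p)%N -> (p <= n)%N -> cos (p%:R * (pi / n%:R)) <= cos (pi / n%:R) :> R.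
  move=> r r1 r2; apply: cos_le_mono => //.
  - by rewrite -[X in X <= _]mul1r ler_wpM2r // ler1n.
  - by rewrite -[X in _ <= X]mul1r ale // mul1r ler_nat.
case: (leqP p n) => hp; first exact: small.
have -> : p%:R * (pi / n%:R) = - ((2 * n - p)%N%:R * (pi / n%:R)) + 2 * pi * 1%:R :> R.
  by rewrite natrB ?natrM; [field | lia].
rewrite cos_per cosN; apply: small; lia.
Qed.
Lemma edge_gauge (R : realType) n i : (3 <= n)%N -> (i < n)%N ->
  gauge R (ngon R n) (0,0)
    ((vtx R n i.+1).1 - (vtx R n i).1, (vtx R n i.+1).2 - (vtx R n i).2)
  = (cos (pi / n%:R * (2 * ((n + 1) %/ 4)%N%:R - 1))
     - cos (pi / n%:R * (2 * ((n + 1) %/ 4)%N%:R + 1))) / cos (pi / n%:R).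
Proof.
move=> hn hi.
set a : R := pi / n%:R.
set k := ((n + 1) %/ 4)%N.
have n0 : (0 < n)%N by lia.
have npos : (0 : R) < n%:R by rewrite ltr0n.
have nz : (n%:R : R) != 0 by rewrite gt_eqF.
have N3 : (3 : R) <= n%:R by rewrite (ler_nat R 3 n).
have ha0 : 0 < a by rewrite divr_gt0 ?pi_gt0.
have hapi2 : a < pi / 2.
  have : 1 * a < 2^-1 * pi by rewrite alt //; lra.
  by rewrite mul1r mulrC.
have ca0 : 0 < cos a by apply: cos_gt0_pihalf; apply/andP; split => //; lra.
have sa0 : 0 < sin a by apply: sin_gt0_pihalf; apply/andP; split.
have k1 : (1 <= k)%N by rewrite /k; lia.
have k4 : (4 * k <= n + 1)%N by rewrite /k; lia.
have k4' : (n <= 4 * k + 2)%N by rewrite /k; lia.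
have K1 : (1 : R) <= k%:R by rewrite (ler_nat R 1 k).
have K4 : 4 * (k%:R : R) <= n%:R + 1.
  by move: k4; rewrite -(ler_nat R) natrD natrM.
have K4' : (n%:R : R) <= 4 * k%:R + 2.
  by move: k4'; rewrite -(ler_nat R) natrD natrM.
set dl : R := 2 * k%:R * a.
have sd0 : 0 < sin dl.
  apply: sin_gt0_pi; apply/andP; split.
    by rewrite /dl mulr_gt0 // mulr_gt0 // ltr0n; lia.
  by rewrite -[X in _ < X]mul1r /dl alt //; lra.
have cDa : cos (dl + a) <= 0.
  have -> : dl + a = (2 * k%:R + 1) * a - pi / 2 + pi / 2 by rewrite /dl; ring.
  rewrite cosDpihalf oppr_le0; apply: sin_ge0_pi; apply/andP; split.
    by rewrite subr_ge0 (mulrC pi) gea //; lra.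
  rewrite lerBlDr.
  have -> : pi + pi / 2 = 3 / 2 * pi :> R by field.
  by rewrite ale //; lra.
have cBa : 0 <= cos (dl - a).
  have -> : dl - a = (2 * k%:R - 1) * a by rewrite /dl; ring.
  apply: cos_ge0_pihalf; apply/andP; split.
    apply: le_trans (_ : 0 <= _).
      by rewrite oppr_le0 divr_ge0 ?pi_ge0.
    by rewrite mulr_ge0 // ?(ltW ha0) //; lra.
  rewrite [X in _ <= X]mulrC.
  by rewrite ale //; lra.
set G := (cos (a * (2 * k%:R - 1)) - cos (a * (2 * k%:R + 1))) / cos a.
have G2 : G = 2 * sin a * sin dl / cos a.
  rewrite /G.
  have -> : a * (2 * k%:R - 1) = dl - a by rewrite /dl; ring.
  have -> : a * (2 * k%:R + 1) = dl + a by rewrite /dl; ring.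
  rewrite cosB cosD; field; by rewrite gt_eqF.
set j := ((i + k) %% n)%N.
set q := ((i + k) %/ n)%N.
have hj : (j < n)%N by rewrite /j ltn_pmod.
have hdiv : (i + k = q * n + j)%N by rewrite /q /j -divn_eq.
have Hdiv : (i%:R : R) = q%:R * n%:R + j%:R - k%:R.
  have := congr1 (fun m : nat => (m%:R : R)) hdiv; rewrite /= !natrD natrM.
  move=> h; rewrite -h; ring.
clearbody j q.
set d : R := (2 * j%:R + 1) * a.
have hd : (2 * i%:R + 1) * a = d - dl + 2 * pi * q%:R.
  by rewrite /d /dl /a Hdiv; field.
set al := cos d / cos a.
set be := sin d / cos a.
have caz : cos a != 0 by rewrite gt_eqF.
apply: (@gauge_cert R _ _ al be G).
- by rewrite G2 divr_gt0 // mulr_gt0 // mulr_gt0.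
- apply: ngon_lin => m hm.
  rewrite vtxE /= /al /be.
  have -> : cos d / cos a * cos (2 * m%:R * a) + sin d / cos a * sin (2 * m%:R * a)
     = cos (2 * m%:R * a - d) / cos a by rewrite cosB; field.
  rewrite ler_pdivrMr // mul1r.
  case: (ltnP j m) => hjm.
    have -> : 2 * m%:R * a - d = (2 * (m - j) - 1)%N%:R * a.
      have h1 : (1 <= 2 * (m - j))%N by clear -hjm; lia.
      rewrite (natrB _ h1) natrM (natrB _ (ltnW hjm)) /d; ring.
    by apply: cos_odd_le => //; clear -hjm hm hj; lia.
  have -> : 2 * m%:R * a - d = - ((2 * (j - m) + 1)%N%:R * a).
    by rewrite natrD natrM (natrB _ hjm) /d; ring.
  by rewrite cosN; apply: cos_odd_le => //; clear -hjm hm hj; lia.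
- rewrite !vtxE /= /G /al /be.
  have E1 : cos (a * (2 * k%:R - 1)) = cos (2 * (i.+1)%:R * a - d).
    have -> : 2 * (i.+1)%:R * a - d = - (a * (2 * k%:R - 1)) + 2 * pi * q%:R.
      have -> : 2 * (i.+1)%:R * a = (2 * i%:R + 1) * a + a by rewrite -addn1 natrD; ring.
      by rewrite hd /dl; ring.
    by rewrite cos_per cosN.
  have E2 : cos (a * (2 * k%:R + 1)) = cos (2 * i%:R * a - d).
    have -> : 2 * i%:R * a - d = - (a * (2 * k%:R + 1)) + 2 * pi * q%:R.
      have -> : 2 * i%:R * a = (2 * i%:R + 1) * a - a by ring.
      by rewrite hd /dl; ring.
    by rewrite cos_per cosN.
  by rewrite E1 E2 !cosB; field.
- set j' := (j.+1 %% n)%N.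
  have hj' : (j' < n)%N by rewrite /j' ltn_pmod.
  have hjj : j != j'.
    rewrite /j'; case: (ltnP j.+1 n) => h.
      by rewrite modn_small //; clear -h; lia.
    have -> : j.+1 = n by clear -h hj; lia.
    by rewrite modnn; clear -hn hj h; lia.
  have vj : vtx R n j' = vtx R n j.+1.
    by rewrite [in RHS](divn_eq j.+1 n) addnC vtx_per.
  set s := cos a * cos dl / (sin a * sin dl).
  have sdz : sin dl != 0 by rewrite gt_eqF.
  have saz : sin a != 0 by rewrite gt_eqF.
  have hs1 : s <= 1.
    rewrite /s ler_pdivrMr ?mulr_gt0 // mul1r.
    by move: cDa; rewrite cosD; lra.
  have hs2 : -1 <= s.
    rewrite /s ler_pdivlMr ?mulr_gt0 //.
    by move: cBa; rewrite cosB; lra.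
  exists (pair ((1 - s) / 2 * (vtx R n j).1 + (1 + s) / 2 * (vtx R n j').1)
          ((1 - s) / 2 * (vtx R n j).2 + (1 + s) / 2 * (vtx R n j').2)).
  split.
    apply: (ngon_two _ _ _ _ ((1 - s) / 2) ((1 + s) / 2) _ hj hj' hjj) => //; [lra | lra | by field].
  rewrite vj !vtxE /= G2.
  have -> : 2 * (i.+1)%:R * a = d - dl + a + 2 * pi * q%:R.
    have -> : 2 * (i.+1)%:R * a = (2 * i%:R + 1) * a + a by rewrite -addn1 natrD; ring.
    by rewrite hd; ring.
  have -> : 2 * i%:R * a = d - dl - a + 2 * pi * q%:R.
    have -> : 2 * i%:R * a = (2 * i%:R + 1) * a - a by ring.
    by rewrite hd; ring.
  have -> : 2 * j%:R * a = d - a by rewrite /d; ring.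
  have -> : 2 * (j.+1)%:R * a = d + a by rewrite /d -addn1 natrD; ring.
  rewrite !cos_per !sin_per /s.
  rewrite !(cosD, sinD, cosN, sinN).
  congr (_, _); field; apply/and3P; split => //.
Qed.
Lemma basic_a (R : realType) n : (3 <= n)%N ->
  0 < cos (pi / n%:R) :> R /\ 0 < sin (pi / n%:R) :> R.
Proof.
move=> hn.
have n0 : (0 < n)%N by lia.
have N3 : (3 : R) <= n%:R by rewrite (ler_nat R 3 n).
have ha0 : 0 < pi / n%:R :> R by rewrite divr_gt0 ?pi_gt0 ?ltr0n.
have hapi2 : pi / n%:R < pi / 2 :> R.
  have : 1 * (pi / n%:R) < 2^-1 * pi :> R by rewrite alt //; lra.
  by rewrite mul1r (mulrC _ pi).
have p2 : 0 < pi / 2 :> R by rewrite divr_gt0 ?pi_gt0.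
split; [apply: cos_gt0_pihalf | apply: sin_gt0_pihalf]; apply/andP; split => //.
lra.
Qed.

Lemma pi_nE (R : realType) n : (3 <= n)%N ->
  pi_n R n = n%:R / (2 * cos (pi / n%:R)) *
      (cos (pi / n%:R * (2 * ((n + 1) %/ 4)%N%:R - 1))
       - cos (pi / n%:R * (2 * ((n + 1) %/ 4)%N%:R + 1))).
Proof.
move=> hn; have [ca0 _] := basic_a R n hn.
rewrite /pi_n (eq_bigr _ (fun (i : 'I_n) _ => edge_gauge R n i hn (ltn_ord i))).
rewrite sumr_const card_ord -mulr_natl; field; by rewrite gt_eqF.
Qed.

Lemma pi_nS (R : realType) n : (3 <= n)%N ->
  pi_n R n = n%:R * sin (pi / n%:R) * sin (2 * ((n + 1) %/ 4)%N%:R * (pi / n%:R))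
             / cos (pi / n%:R).
Proof.
move=> hn; have [ca0 _] := basic_a R n hn.
rewrite pi_nE //.
set a := pi / n%:R; set k := ((n + 1) %/ 4)%N%:R.
have -> : a * (2 * k - 1) = 2 * k * a - a by ring.
have -> : a * (2 * k + 1) = 2 * k * a + a by ring.
rewrite cosB cosD; field; by rewrite gt_eqF.
Qed.
Lemma cos_pi3 (R : realType) : cos (pi / 3%:R) = 1 / 2 :> R.
Proof.
have [c0 s0] := basic_a R 3 (leqnn 3).
set x : R := pi / 3%:R.
have h : cos (x + x) = cos (pi - x) by congr cos; rewrite /x; field.
move: h; rewrite cosD cosB cospi sinpi.
have := cos2Dsin2 x.
nra.
Qed.

Lemma sin_pi6 (R : realType) : sin (pi / 6%:R) = 1 / 2 :> R.
Proof.
by rewrite -cosBpihalf -cos_pi3 -cosN; congr cos; field.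
Qed.

Lemma cos_pi5 (R : realType) : 4 * cos (pi / 5%:R) ^+ 2 - 2 * cos (pi / 5%:R) - 1 = 0 :> R.
Proof.
have [c0 s0] := basic_a R 5 isT.
set x : R := pi / 5%:R.
have h : cos (x + x + x) = cos (pi - (x + x)) by congr cos; rewrite /x; field.
move: h; rewrite cosB cospi sinpi !cosD !sinD.
have := cos2Dsin2 x.
move=> h1 h2.
have : (cos x + 1) * (4 * cos x ^+ 2 - 2 * cos x - 1) = 0.
  have e : sin x ^+ 2 = 1 - cos x ^+ 2 by lra.
  move: h2; rewrite -!expr2.
  nra.
move/eqP; rewrite mulf_eq0 => /orP[/eqP h|/eqP //].
lra.
Qed.
Lemma case0 (R : realType) n : (3 <= n)%N -> (n %% 4 = 0)%N ->
  pi_n R n = n%:R * tan (pi / n%:R).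
Proof.
move=> hn h4; have [c0 s0] := basic_a R n hn.
rewrite pi_nS //.
have hk : (4 * ((n + 1) %/ 4) = n)%N by clear -hn h4; lia.
have k0 : (0 < (n + 1) %/ 4)%N by clear -hn h4; lia.
have -> : 2 * ((n + 1) %/ 4)%N%:R * (pi / n%:R) = pi / 2 :> R.
  move: ((n + 1) %/ 4)%N hk k0 => k hk k0.
  rewrite -hk natrM; field; rewrite pnatr_eq0 -lt0n k0 //.
by rewrite sin_pihalf mulr1 /tan mulrA.
Qed.

Lemma case2 (R : realType) n : (3 <= n)%N -> (n %% 4 = 2)%N ->
  pi_n R n = n%:R * sin (pi / n%:R).
Proof.
move=> hn h4; have [c0 s0] := basic_a R n hn.
rewrite pi_nS //.
have hk : (4 * ((n + 1) %/ 4) + 2 = n)%N by clear -hn h4; lia.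
have -> : 2 * ((n + 1) %/ 4)%N%:R * (pi / n%:R) = - (pi / n%:R - pi / 2) :> R.
  have nz : (n%:R : R) != 0 by rewrite pnatr_eq0; clear -hn; lia.
  move: ((n + 1) %/ 4)%N hk => k hk.
  move: nz; rewrite -hk natrD natrM => nz; field; exact: nz.
rewrite sinN sinBpihalf opprK; field; by rewrite gt_eqF.
Qed.

Lemma case_odd (R : realType) n : (3 <= n)%N -> odd n ->
  pi_n R n = n%:R * tan (pi / n%:R) * cos (pi / (2 * n%:R)).
Proof.
move=> hn ho; have [c0 s0] := basic_a R n hn.
rewrite pi_nS //.
have nz : (n%:R : R) != 0 by rewrite pnatr_eq0; clear -hn; lia.
have h2 : (n %% 2 = 1)%N by rewrite modn2 ho.
have -> : pi / (2 * n%:R) = (pi / n%:R) / 2 :> R by field.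
have -> : sin (2 * ((n + 1) %/ 4)%N%:R * (pi / n%:R)) = cos ((pi / n%:R) / 2) :> R.
  have [h1|h3] : (4 * ((n + 1) %/ 4) + 1 = n \/ 4 * ((n + 1) %/ 4) = n + 1)%N.
    by clear -hn h2; lia.
  - have -> : 2 * ((n + 1) %/ 4)%N%:R * (pi / n%:R) = - ((pi / n%:R) / 2 - pi / 2) :> R.
      move: ((n + 1) %/ 4)%N h1 => k h1.
      move: nz; rewrite -h1 natrD natrM => nz; field; exact: nz.
    by rewrite sinN sinBpihalf opprK.
  - have -> : 2 * ((n + 1) %/ 4)%N%:R * (pi / n%:R) = (pi / n%:R) / 2 + pi / 2 :> R.
      have e : (4 * ((n + 1) %/ 4)%N%:R : R) = n%:R + 1 by rewrite -natrM h3 natrD.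
      move: ((n + 1) %/ 4)%N e => k e.
      have -> : 2 * k%:R * (pi / n%:R) = (4 * k%:R) * (pi / n%:R) / 2 :> R by field.
      rewrite e; field; exact: nz.
    by rewrite sinDpihalf.
rewrite /tan; field; by rewrite gt_eqF.
Qed.
Theorem mainTheorem4 (R : realType) (n : nat) (hn : (3 <= n)%N) :
  pi_n R n =
    n%:R / (2 * cos (pi / n%:R)) *
      (cos (pi / n%:R * (2 * ((n + 1) %/ 4)%N%:R - 1))
       - cos (pi / n%:R * (2 * ((n + 1) %/ 4)%N%:R + 1)))
  /\ ((n %% 4 = 0)%N -> pi_n R n = n%:R * tan (pi / n%:R))
  /\ (odd n -> pi_n R n = n%:R * tan (pi / n%:R) * cos (pi / (2 * n%:R)))
  /\ ((n %% 4 = 2)%N -> pi_n R n = n%:R * sin (pi / n%:R))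
  /\ (pi_n R 3 = 9 / 2 /\ pi_n R 4 = 4
      /\ pi_n R 5 = 5 * (5 - Num.sqrt 5) / 4
      /\ pi_n R 6 = 3 /\ pi_n R 8 = 8 * Num.sqrt 2 - 8).
Proof.
split; first exact: pi_nE.
split; first exact: case0.
split; first exact: case_odd.
split; first exact: case2.
split.
  rewrite (pi_nS R 3 isT).
  have -> : ((3 + 1) %/ 4)%N = 1%N by [].
  have -> : 2 * 1%:R * (pi / 3%:R) = pi - pi / 3%:R :> R by field.
  rewrite sinB sinpi cospi cos_pi3.
  have := cos2Dsin2 (pi / 3%:R : R); rewrite cos_pi3 => h.
  set s := sin (pi / 3%:R) in h *.
  rewrite mul0r sub0r mulN1r opprK.
  have -> : (3%:R * s * s / (1 / 2) : R) = 6 * s ^+ 2 by rewrite expr2; field.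
  lra.
split.
  by rewrite (case0 R 4 isT erefl) tan_piquarter mulr1.
split.
  have [c0 s0] := basic_a R 5 isT.
  have q := cos_pi5 R.
  rewrite (pi_nS R 5 isT).
  have -> : ((5 + 1) %/ 4)%N = 1%N by [].
  have -> : 2 * 1%:R * (pi / 5%:R) = pi / 5%:R + pi / 5%:R :> R by field.
  rewrite sinD.
  have h := cos2Dsin2 (pi / 5%:R : R).
  set c := cos (pi / 5%:R) in q c0 h *.
  set s := sin (pi / 5%:R) in s0 h *.
  have q4 : 0 <= 4 * c - 1 by nra.
  have -> : Num.sqrt 5 = 4 * c - 1 :> R.
    have -> : (5 : R) = (4 * c - 1) ^+ 2 by nra.
    by rewrite sqrtr_sqr ger0_norm.
  have -> : 5%:R * s * (s * c + c * s) / c = 10 * s ^+ 2 :> R.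
    by field; rewrite gt_eqF.
  nra.
split.
  by rewrite (case2 R 6 isT erefl) sin_pi6; field.
have [c0 s0] := basic_a R 8 isT.
rewrite (case0 R 8 isT erefl) /tan.
have h : sin (pi / 8%:R + pi / 8%:R) = cos (pi / 8%:R + pi / 8%:R) :> R.
  by rewrite -cosBpihalf -cosN; congr cos; field.
move: h; rewrite sinD cosD.
have h2 := cos2Dsin2 (pi / 8%:R : R).
set c := cos (pi / 8%:R) in c0 h2 *.
set s := sin (pi / 8%:R) in s0 h2 *.
move=> h.
have e : (2 : R) = ((s + c) / c) ^+ 2.
  have e2 : (s + c) ^+ 2 = 2 * c ^+ 2 by nra.
  rewrite expr_div_n e2; field; by rewrite gt_eqF.
rewrite e sqrtr_sqr ger0_norm ?divr_ge0 ?addr_ge0 ?ltW //.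
field; by rewrite gt_eqF.
Qed.
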